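(* Let $M$ be a compact orientable $d$-dimensional manifold with piecewise smooth boundary, let $g_{[0]}$ be a Riemannian metric on $M$, let $\overline{E}$ be a fixed smooth symmetric $(0,2)$-tensor field on $M$, and for a real parameter $\alpha$ let $g_{[t]}=g_{[0]}+2\alpha\overline{E}$ (a Riemannian metric for $|\alpha|$ small), so that the Green strain tensor is $E=\tfrac12(g_{[t]}-g_{[0]})=\alpha\overline{E}$. Let $C$ be a stiffness tensor field for the reference metric $g_{[0]}$, and define the strain energy $W=\int_M \tfrac12 C(E,E)\,\upsilon_{[0]}$, where $\upsilon_{[0]}$ is the Riemannian volume form of $g_{[0]}$. Define the swapped states by taking $g_{[\hat 0]}=g_{[t]}$ as reference metric and $g_{[\hat t]}=g_{[0]}$ as current metric, with swapped strain $\hat E=\tfrac12(g_{[\hat t]}-g_{[\hat 0]})$, swapped volume form $\upsilon_{[\hat 0]}$ (the volume form of $g_{[t]}$), a swapped stiffness tensor field $\hat C$ (the stiffness tensor field for the reference metric $g_{[t]}$) satisfying $\hat C\in C+O(\alpha)$, and swapped strain energy $\hat W=\int_M\tfrac12\hat C(\hat E,\hat E)\,\upsilon_{[\hat 0]}$. Then $\hat W\in W+O(\alpha^3)$ as $\alpha\to 0$; i.e. $W$ and $\hat W$ agree up to a residual term of order $\alpha^3$.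
   Context: A stiffness tensor field is a $(4,0)$-tensor field $C=C^{ijkl}\partial_{u^i}\otimes\partial_{u^j}\otimes\partial_{u^k}\otimes\partial_{u^l}$ with $C^{ijkl}=C^{klij}=C^{jikl}=C^{ijlk}$; $C(E,E)=C^{ijkl}E_{ij}E_{kl}$. In the isotropic case, $C^{ijkl}=\lambda g^{*ij}g^{*kl}+\mu(g^{*ik}g^{*jl}+g^{*il}g^{*jk})$ with $g^*$ the dual of the reference metric and $\lambda,\mu$ the Lamé parameters. $O(\alpha^k)$ denotes the class of quantities bounded by a constant times $|\alpha|^k$ as $\alpha\to0$. *)

(* Defs.v *)
From HB Require Import structures.
From mathcomp Require Import all_boot all_order all_algebra.
From mathcomp Require Import all_classical all_reals all_analysis.
Set Implicit Arguments. Unset Strict Implicit. Unset Printing Implicit Defensive.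
Import Order.TTheory GRing.Theory Num.Theory.
Import numFieldNormedType.Exports.
Local Open Scope classical_set_scope.
Local Open Scope ring_scope.

(* Components of a (4,0)-tensor at a point, w.r.t. a frame of the tangent space. *)
Definition tensor4 (R : Type) (d : nat) := 'I_d -> 'I_d -> 'I_d -> 'I_d -> R.

Definition stiffness_sym (R : Type) (d : nat) (C : tensor4 R d) : Prop :=
  forall i j k l, C i j k l = C k l i j /\ C i j k l = C j i k l /\
                  C i j k l = C i j l k.

Definition tcontract (R : ringType) (d : nat) (C : tensor4 R d) (E : 'M[R]_d) : R :=
  \sum_(i < d) \sum_(j < d) \sum_(k < d) \sum_(l < d) C i j k l * E i j * E k l.

Section Elasticity.
Variables (R : realType) (d : nat) (dM : measure_display) (M : measurableType dM).
Variable mu : {measure set M -> \bar R}. (* the Riemannian volume measure of g_[0] *)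
Variables (g0 Ebar : M -> 'M[R]_d).

Definition metric_t (alpha : R) (p : M) : 'M[R]_d := g0 p + (2 * alpha) *: Ebar p.

Definition strain (alpha : R) (p : M) : 'M[R]_d := 2^-1 *: (metric_t alpha p - g0 p).

(* swapped strain  Ehat = 1/2 (g_[hat t] - g_[hat 0]) = 1/2 (g_[0] - g_[t]) *)
Definition strain_hat (alpha : R) (p : M) : 'M[R]_d := 2^-1 *: (g0 p - metric_t alpha p).

(* density of the volume form of g_[t] with respect to that of g_[0] *)
Definition vol_ratio (alpha : R) (p : M) : R :=
  Num.sqrt (\det (metric_t alpha p) / \det (g0 p)).

Definition strain_energy (C : M -> tensor4 R d) (alpha : R) : R :=
  Rintegral mu setT (fun p => 2^-1 * tcontract (C p) (strain alpha p)).

(* What = int_M 1/2 Chat(Ehat,Ehat) upsilon_[hat 0],  upsilon_[hat 0] = vol_ratio * upsilon_[0] *)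
Definition strain_energy_hat (Chat : R -> M -> tensor4 R d) (alpha : R) : R :=
  Rintegral mu setT
    (fun p => 2^-1 * tcontract (Chat alpha p) (strain_hat alpha p) * vol_ratio alpha p).

End Elasticity.

(* Main.v *)
Require Import Defs.
From HB Require Import structures.
From mathcomp Require Import all_boot all_order all_algebra.
From mathcomp Require Import all_classical all_reals all_analysis.
From mathcomp Require Import ring lra perm fingroup.
Import Order.TTheory GRing.Theory Num.Theory.
Import numFieldNormedType.Exports.
Local Open Scope classical_set_scope.
Local Open Scope ring_scope.
Set Implicit Arguments. Unset Strict Implicit. Unset Printing Implicit Defensive.


Lemma sq11_ge0 (R : realFieldType) (x : 'M[R]_1) : 0 <= (x *m x^T) 0 0.
Proof. by rewrite !mxE big_ord1 mxE -expr2 sqr_ge0. Qed.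

Lemma schur_step (R : realFieldType) (c : R) (hc : 0 < c) n (a : 'M[R]_1) r s D : s^T = r -> D^T = D ->
 (forall v : 'rV_(1+n), c * (v *m v^T) 0 0 <= (v *m block_mx a r s D *m v^T) 0 0) ->
 let S := D - (a 0 0)^-1 *: (s *m r) in
 [/\ c <= a 0 0, S^T = S,
   (forall w : 'rV_n, c * (w *m w^T) 0 0 <= (w *m S *m w^T) 0 0) &
   \det (block_mx a r s D) = a 0 0 * \det S].
Proof.
move=> rs trD hA S.
have ha : c <= a 0 0.
  have := hA (row_mx 1 0).
  rewrite tr_row_mx mul_row_col mul_row_block !mul1mx !mul0mx !addr0.
  rewrite mul_row_col trmx0 mulmx0 addr0 trmx1 mulmx1 mxE eqxx mulr1n mulr1.
  by [].
have a0 : a 0 0 != 0 by apply/lt0r_neq0; exact: (lt_le_trans hc ha).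
have sa : s *m a = a 0 0 *: s by rewrite [a]mx11_scalar mul_mx_scalar -mx11_scalar.
split => //.
- by rewrite /S linearB /= linearZ /= trmx_mul trD rs -rs trmxK.
- move=> w.
  pose x : 'rV_1 := - (a 0 0)^-1 *: (w *m s).
  have := hA (row_mx x w).
  rewrite mul_row_block tr_row_mx mul_row_col mul_row_col.
  have -> : x *m a + w *m s = 0.
    by rewrite /x -scalemxAl -mulmxA sa -scalemxAr scalerA mulNr mulVf // scaleN1r addNr.
  rewrite mul0mx add0r => h; apply: (le_trans _ (le_trans h _)).
    have -> : (x *m x^T + w *m w^T) 0 0 = (x *m x^T) 0 0 + (w *m w^T) 0 0.
      by rewrite mxE.
    rewrite ler_pM2l // lerDr; exact: sq11_ge0.
  rewrite le_eqVlt; apply/orP; left; apply/eqP; congr (_ 0 0).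
  rewrite /S /x mulmxBr mulmxBl mulmxDl -!scalemxAr -!scalemxAl !mulmxA.
  by rewrite addrC scaleNr.
- pose L : 'M[R]_(1 + n) := block_mx 1 0 (- (a 0 0)^-1 *: s) 1.
  have dL : \det L = 1 by rewrite det_lblock !det1 mulr1.
  rewrite -[LHS]mul1r -dL -det_mulmx mulmx_block.
  rewrite !mul1mx !mul0mx !addr0 -scalemxAl sa scalerA mulNr mulVf // scaleN1r addNr.
  by rewrite det_ublock det_mx11 /S addrC -scalemxAl scaleNr.
Qed.

Lemma det_posdef (R : realFieldType) (c : R) (hc : 0 < c) n :
  forall A : 'M[R]_n, A^T = A ->
  (forall v : 'rV_n, c * (v *m v^T) 0 0 <= (v *m A *m v^T) 0 0) ->
  c ^+ n <= \det A.
Proof.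
elim: n => [|n IH] A.
  by move=> _ _; rewrite det_mx00 expr0.
have -> : A = block_mx (ulsubmx (A : 'M[R]_(1 + n))) (ursubmx (A : 'M[R]_(1 + n)))
   (dlsubmx (A : 'M[R]_(1 + n))) (drsubmx (A : 'M[R]_(1 + n))) by rewrite submxK.
move: (ulsubmx _) (ursubmx _) (dlsubmx _) (drsubmx _) => a r s D.
move=> trA hA.
have /eq_block_mx [_ rs _ trD] := etrans (esym (tr_block_mx a r s D)) trA.
have [ha trS hS ->] := schur_step hc rs trD hA.
rewrite exprS ler_pM //; first exact: ltW.
- exact: exprn_ge0 (ltW hc).
- exact: IH.
Qed.

Lemma sum_bound (R : realFieldType) n (F : 'I_n -> R) X :
  (forall i, `|F i| <= X) -> `|\sum_i F i| <= n%:R * X.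
Proof.
move=> h; apply: (le_trans (ler_norm_sum _ _ _)).
apply: (@le_trans _ _ (\sum_(i < n) X)); first by apply: ler_sum => i _.
by rewrite sumr_const card_ord mulr_natl.
Qed.

Lemma tc_bound (R : realFieldType) d (T : tensor4 R d) (E : 'M[R]_d) (B BE : R) :
  (forall i j k l, `|T i j k l| <= B) -> (forall i j, `|E i j| <= BE) ->
  `|tcontract T E| <= d%:R * (d%:R * (d%:R * (d%:R * (B * BE * BE)))).
Proof.
move=> hT hE; rewrite /tcontract.
apply: sum_bound => i; apply: sum_bound => j; apply: sum_bound => k.
apply: sum_bound => l.
rewrite !normrM ler_pM // ?mulr_ge0 // ler_pM //.
Qed.

Lemma tc_sub (R : comRingType) d (T1 T2 : tensor4 R d) (E : 'M[R]_d) :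
  tcontract T1 E - tcontract T2 E =
  tcontract (fun i j k l => T1 i j k l - T2 i j k l) E.
Proof.
rewrite /tcontract -sumrB; apply: eq_bigr => i _.
rewrite -sumrB; apply: eq_bigr => j _.
rewrite -sumrB; apply: eq_bigr => k _.
rewrite -sumrB; apply: eq_bigr => l _.
by rewrite !mulrBl.
Qed.

Lemma tc_scale (R : comRingType) d (T : tensor4 R d) (E : 'M[R]_d) (x : R) :
  tcontract T (x *: E) = x ^+ 2 * tcontract T E.
Proof.
rewrite /tcontract mulr_sumr; apply: eq_bigr => i _.
rewrite mulr_sumr; apply: eq_bigr => j _.
rewrite mulr_sumr; apply: eq_bigr => k _.
rewrite mulr_sumr; apply: eq_bigr => l _.
rewrite !mxE; ring.
Qed.

Lemma prod_bound (R : realFieldType) (I : Type) (s : seq I) (F : I -> R) M :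
  (forall i, `|F i| <= M) -> `|\prod_(i <- s) F i| <= M ^+ size s.
Proof.
move=> h; elim: s => [|x s IH]; first by rewrite big_nil normr1 expr0.
by rewrite big_cons normrM /= exprS ler_pM.
Qed.

Lemma prod_lip (R : realFieldType) (I : Type) (s : seq I) (F G : I -> R) M e :
  1 <= M -> (forall i, `|F i| <= M) -> (forall i, `|G i| <= M) ->
  (forall i, `|F i - G i| <= e) ->
  `|\prod_(i <- s) F i - \prod_(i <- s) G i| <= (size s)%:R * M ^+ size s * e.
Proof.
move=> M1 hF hG hFG; elim: s => [|x s IH].
  by rewrite !big_nil subrr normr0 mul0r mul0r.
rewrite !big_cons /=.
have -> : F x * \prod_(j <- s) F j - G x * \prod_(j <- s) G j =
  (F x - G x) * \prod_(j <- s) F j + G x * (\prod_(j <- s) F j - \prod_(j <- s) G j)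
  by ring.
have e0 : 0 <= e by apply: le_trans (hFG x); exact: normr_ge0.
have Mk : 1 <= M ^+ size s by apply: exprn_ege1.
have h1 : `|(F x - G x) * \prod_(j <- s) F j| <= e * M ^+ size s.
  by rewrite normrM ler_pM // prod_bound.
have h2 : `|G x * (\prod_(j <- s) F j - \prod_(j <- s) G j)| <=
    M * ((size s)%:R * M ^+ size s * e).
  by rewrite normrM ler_pM.
apply: (le_trans (ler_normD _ _)).
have h3 : e * M ^+ size s <= e * M ^+ size s * M by rewrite ler_peMr // mulr_ge0 // (le_trans ler01).
rewrite exprS -natr1.
have -> : ((size s)%:R + 1) * (M * M ^+ size s) * e =
  e * M ^+ size s * M + M * ((size s)%:R * M ^+ size s * e) by ring.
by apply: lerD => //; apply: le_trans h3.
Qed.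

Lemma det_lip (R : realFieldType) n (Ba Bb : R) : exists K : R, 0 <= K /\
  forall (A B : 'M[R]_n) (t : R), (forall i j, `|A i j| <= Ba) ->
  (forall i j, `|B i j| <= Bb) -> `|t| <= 1 ->
  `|\det (A + (2 * t) *: B) - \det A| <= K * `|t|.
Proof.
pose M := 1 + `|Ba| + 2 * `|Bb|.
pose N := size (index_enum 'I_n).
exists (\sum_(s : {perm 'I_n}) (N%:R * M ^+ N * (2 * `|Bb|))); split.
  have M0 : 0 <= M by rewrite /M; have := normr_ge0 Ba; have := normr_ge0 Bb; lra.
  by apply: sumr_ge0 => s _; rewrite !mulr_ge0 // ?exprn_ge0.
move=> A B t hA hB ht.
have M1 : 1 <= M by rewrite /M; have := normr_ge0 Ba; have := normr_ge0 Bb; lra.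
rewrite /determinant -sumrB.
apply: (le_trans (ler_norm_sum _ _ _)).
rewrite mulr_suml; apply: ler_sum => s _.
rewrite -mulrBr normrM normrX normrN normr1 expr1n mul1r.
have hAi : forall i j, `|A i j| <= M.
  move=> i j; apply: (le_trans (hA i j)); rewrite /M.
  have := ler_norm Ba; have := normr_ge0 Bb; lra.
have hABi : forall i j, `|(A + (2 * t) *: B) i j| <= M.
  move=> i j; rewrite !mxE; apply: (le_trans (ler_normD _ _)).
  rewrite normrM normrM [`|2|]ger0_norm // /M.
  have := hA i j; have := ler_norm Ba; have := hB i j; have := normr_ge0 t.
  have := normr_ge0 (B i j); have := ler_norm Bb.
  move=> *; nra.
have := @prod_lip R _ (index_enum 'I_n) (fun i => (A + (2 * t) *: B) i (s i))
  (fun i => A i (s i)) M (2 * `|Bb| * `|t|) M1 (fun i => hABi i (s i))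
  (fun i => hAi i (s i)).
move=> H; apply: le_trans (H _) _.
  move=> i; rewrite !mxE addrAC subrr add0r normrM normrM [`|2|]ger0_norm //.
  have := hB i (s i); have := ler_norm Bb; have := normr_ge0 t; have := normr_ge0 (B i (s i)).
  move=> *; nra.
by rewrite -/N !mulrA.
Qed.

Lemma sqrt_lip1 (R : rcfType) (x : R) : `|Num.sqrt x - 1| <= `|x - 1|.
Proof.
have [x0|x0] := lerP x 0.
  rewrite ler0_sqrtr // sub0r normrN normr1 ler0_norm; lra.
have -> : x - 1 = (Num.sqrt x - 1) * (Num.sqrt x + 1).
  by rewrite mulrDr mulr1 mulrBl mul1r -expr2 sqr_sqrtr ?(ltW x0) //; ring.
rewrite normrM ler_peMr // ger0_norm; first by have := sqrtr_ge0 x; lra.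
by have := sqrtr_ge0 x; lra.
Qed.

Lemma bdd_integrable (R : realType) (dM : measure_display) (M : measurableType dM)
  (mu : {measure set M -> \bar R}) (f : M -> R) (B : R) :
  (mu setT < +oo)%E -> measurable_fun setT f -> (forall x, `|f x| <= B) ->
  mu.-integrable setT (EFin \o f).
Proof.
move=> muT mf hB; apply/integrableP; split; first exact/measurable_realfun.measurable_EFinP.
apply: le_lt_trans.
  apply: (integral_le_bound (`|B|)%:E) => //; first exact/measurable_realfun.measurable_EFinP.
  by apply: aeW => z _; rewrite /= lee_fin (le_trans (hB z)) // ler_norm.
by rewrite lte_mul_pinfty.
Qed.

Lemma Rint_bound (R : realType) (dM : measure_display) (M : measurableType dM)
  (mu : {measure set M -> \bar R}) (f : M -> R) (B : R) :
  (mu setT < +oo)%E -> measurable_fun setT f -> (forall x, `|f x| <= B) ->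
  `|Rintegral mu setT f| <= B * fine (mu setT).
Proof.
move=> muT mf hB.
have mnf : measurable_fun setT (fun x => `|f x|).
  exact: measurableT_comp (@measurable_realfun.normr_measurable R setT) mf.
apply: (le_trans (le_normr_Rintegral measurableT (bdd_integrable muT mf hB))).
rewrite -Rintegral_cst //; apply: le_Rintegral => //.
- apply: (bdd_integrable (B := B) muT mnf) => x; by rewrite normr_id.
- by apply: (bdd_integrable (B := `|B|) muT (measurable_cst _)) => x.
Qed.

Lemma meas_tc (R : realType) (dM : measure_display) (M : measurableType dM) d
  (T : M -> tensor4 R d) (E : M -> 'M[R]_d) :
  (forall i j k l, measurable_fun setT (fun p => T p i j k l)) ->
  (forall i j, measurable_fun setT (fun p => E p i j)) ->
  measurable_fun setT (fun p => tcontract (T p) (E p)).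
Proof.
move=> mT mE; rewrite /tcontract.
apply: measurable_sum => i; apply: measurable_sum => j.
apply: measurable_sum => k; apply: measurable_sum => l.
apply: measurable_realfun.measurable_funM => //.
exact: measurable_realfun.measurable_funM.
Qed.

Lemma meas_det (R : realType) (dM : measure_display) (M : measurableType dM) d
  (G : M -> 'M[R]_d) :
  (forall i j, measurable_fun setT (fun p => G p i j)) ->
  measurable_fun setT (fun p => \det (G p)).
Proof.
move=> mG; rewrite /determinant.
apply: measurable_sum => s.
apply: measurable_realfun.measurable_funM => //.
exact: measurable_prod.
Qed.

Lemma eqle (R : numDomainType) (x y : R) : x = y -> x <= y.
Proof. by move->. Qed.

Unset Implicit Arguments.

Theorem mainTheorem1 (R : realType) (d : nat) (dM : measure_display)
  (M : measurableType dM) (mu : {measure set M -> \bar R})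
  (g0 Ebar : M -> 'M[R]_d) (C : M -> tensor4 R d) (Chat : R -> M -> tensor4 R d) :
  (* compactness: finite total volume *)
  (mu setT < +oo)%E ->
  (* g_[0] is a (uniformly) positive definite symmetric metric, bounded *)
  (forall p, (g0 p)^T = g0 p) ->
  (exists2 c : R, 0 < c & forall p (v : 'rV[R]_d),
      c * (v *m v^T) 0 0 <= (v *m g0 p *m v^T) 0 0) ->
  (exists B : R, forall p i j, `|g0 p i j| <= B) ->
  (forall i j, measurable_fun setT (fun p => g0 p i j)) ->
  (* Ebar is a bounded symmetric (0,2)-tensor field *)
  (forall p, (Ebar p)^T = Ebar p) ->
  (exists B : R, forall p i j, `|Ebar p i j| <= B) ->
  (forall i j, measurable_fun setT (fun p => Ebar p i j)) ->
  (* C is a bounded stiffness tensor field *)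
  (forall p, stiffness_sym (C p)) ->
  (exists B : R, forall p i j k l, `|C p i j k l| <= B) ->
  (forall i j k l, measurable_fun setT (fun p => C p i j k l)) ->
  (* Chat is a stiffness tensor field for each alpha, with Chat in C + O(alpha) *)
  (forall alpha p, stiffness_sym (Chat alpha p)) ->
  (forall alpha i j k l, measurable_fun setT (fun p => Chat alpha p i j k l)) ->
  (exists K : R, exists2 delta : R, 0 < delta & forall alpha : R, `|alpha| < delta ->
      forall p i j k l, `|Chat alpha p i j k l - C p i j k l| <= K * `|alpha|) ->
  (* conclusion: What in W + O(alpha^3) *)
  exists K : R, exists2 delta : R, 0 < delta & forall alpha : R, `|alpha| < delta ->
    `|strain_energy_hat mu g0 Ebar Chat alpha - strain_energy mu g0 Ebar C alpha|
      <= K * `|alpha| ^+ 3.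
Proof.
move=> muT trg0 [c c0 hc] [Bg hg] mg symE [BE hE] mE symC [BC hC] mC symCh mCh
  [K0 [dl0 dl0p hK0]].
have [Kd [Kd0 hKd]] := det_lip d Bg BE.
pose m := c ^+ d.
have m0 : 0 < m := exprn_gt0 d c0.
have detlb p : m <= \det (g0 p) := det_posdef c0 (trg0 p) (hc p).
pose Kv := Kd / m.
have Kv0 : 0 <= Kv by rewrite divr_ge0 // ltW.
have two0 : (2 : R) != 0 by rewrite pnatr_eq0.
have i2 : (0 : R) <= 2^-1 by rewrite invr_ge0.
have volb al p : `|al| <= 1 -> `|vol_ratio g0 Ebar al p - 1| <= Kv * `|al|.
  move=> hal; apply: le_trans (sqrt_lip1 _) _.
  have dp : 0 < \det (g0 p) := lt_le_trans m0 (detlb p).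
  rewrite /metric_t.
  have -> : \det (g0 p + (2 * al) *: Ebar p) / \det (g0 p) - 1 =
     (\det (g0 p + (2 * al) *: Ebar p) - \det (g0 p)) * (\det (g0 p))^-1.
    by field; exact: lt0r_neq0.
  have dpi : 0 < (\det (g0 p))^-1 by rewrite invr_gt0.
  rewrite normrM (ger0_norm (ltW dpi)).
  have hinv : (\det (g0 p))^-1 <= m^-1 by rewrite lef_pV2 ?posrE.
  apply: le_trans (ler_pM (normr_ge0 _) (ltW dpi) (hKd _ _ al (hg p) (hE p) hal) hinv) _.
  by rewrite /Kv mulrAC lexx.
have hs al p : strain g0 Ebar al p = al *: Ebar p.
  by rewrite /strain /metric_t addrAC subrr add0r scalerA mulrA mulVf ?mul1r.
have hsh al p : strain_hat g0 Ebar al p = (- al) *: Ebar p.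
  by rewrite /strain_hat /metric_t opprD addrA subrr add0r scalerN scalerA mulrA mulVf ?mul1r // scaleNr.
pose Ka := d%:R * (d%:R * (d%:R * (d%:R * (K0 * BE * BE)))).
pose Kc := d%:R * (d%:R * (d%:R * (d%:R * (BC * BE * BE)))).
pose K3 := 2^-1 * (Ka * (1 + Kv) + Kc * Kv).
exists (K3 * fine (mu setT)); exists (Num.min dl0 1).
  by rewrite lt_min dl0p ltr01.
move=> al; rewrite lt_min => /andP[hal0 hal1].
have hal : `|al| <= 1 by exact: ltW.
rewrite /strain_energy_hat /strain_energy.
have mgt : forall i j, measurable_fun setT (fun p => metric_t g0 Ebar al p i j).
  move=> i j; rewrite /metric_t.
  under eq_fun do rewrite !mxE.
  apply: measurable_realfun.measurable_funD => //.
  exact: measurable_realfun.measurable_funM.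
have mvol : measurable_fun setT (vol_ratio g0 Ebar al).
  have -> : vol_ratio g0 Ebar al = fun p => Num.sqrt (\det (metric_t g0 Ebar al p)
      * (Num.max (\det (g0 p)) m)^-1).
    by apply/funext => p; rewrite /vol_ratio max_l //; exact: detlb.
  apply: measurableT_comp.
    apply: (measurable_realfun.nondecreasing_measurable measurableT) => x y.
    exact: ler_wsqrtr.
  apply: measurable_realfun.measurable_funM; first exact: meas_det.
  have h1 : measurable_fun setT (fun x : R => (Num.max x m)^-1).
    apply: (measurable_realfun.nonincreasing_measurable measurableT) => x y xy.
    rewrite lef_pV2 ?posrE ?lt_max ?m0 ?orbT //.
    by rewrite ge_max !le_max xy lexx !orbT.
  exact: (measurableT_comp h1 (meas_det mg)).
have mS : forall i j, measurable_fun setT (fun p => strain g0 Ebar al p i j).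
  move=> i j; under eq_fun do rewrite hs mxE.
  exact: measurable_realfun.measurable_funM.
have mSh : forall i j, measurable_fun setT (fun p => strain_hat g0 Ebar al p i j).
  move=> i j; under eq_fun do rewrite hsh mxE.
  exact: measurable_realfun.measurable_funM.
pose f1 := fun p => 2^-1 * tcontract (Chat al p) (strain_hat g0 Ebar al p) * vol_ratio g0 Ebar al p.
pose f2 := fun p => 2^-1 * tcontract (C p) (strain g0 Ebar al p).
have mf1 : measurable_fun setT f1.
  apply: measurable_realfun.measurable_funM => //.
  apply: measurable_realfun.measurable_funM => //.
  exact: meas_tc.
have mf2 : measurable_fun setT f2.
  apply: measurable_realfun.measurable_funM => //.
  exact: meas_tc.
have hdiff p : `|f1 p - f2 p| <= K3 * `|al| ^+ 3.
  rewrite /f1 /f2 hs hsh !tc_scale sqrrN.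
  set v := vol_ratio g0 Ebar al p.
  set th := tcontract (Chat al p) (Ebar p).
  set tc := tcontract (C p) (Ebar p).
  have -> : 2^-1 * (al ^+ 2 * th) * v - 2^-1 * (al ^+ 2 * tc) =
    2^-1 * al ^+ 2 * ((th - tc) * v + tc * (v - 1)) by ring.
  have ha : `|th - tc| <= Ka * `|al|.
    rewrite /th /tc tc_sub.
    apply: le_trans (tc_bound (B := K0 * `|al|) _ (hE p)) _.
      by move=> i j k l; exact: hK0.
    by apply: eqle; rewrite /Ka; ring.
  have hc' : `|tc| <= Kc by exact: tc_bound.
  have hv : `|v - 1| <= Kv * `|al| by exact: volb.
  have hv' : `|v| <= 1 + Kv.
    have -> : v = (v - 1) + 1 by ring.
    apply: le_trans (ler_normD _ _) _; rewrite normr1 addrC lerD2l.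
    apply: le_trans hv _; by rewrite ler_piMr.
  have hS : `|(th - tc) * v + tc * (v - 1)| <= (Ka * (1 + Kv) + Kc * Kv) * `|al|.
    apply: le_trans (ler_normD _ _) _; rewrite !normrM.
    have h1 := ler_pM (normr_ge0 _) (normr_ge0 _) ha hv'.
    have h2 := ler_pM (normr_ge0 _) (normr_ge0 _) hc' hv.
    apply: le_trans (lerD h1 h2) _; apply: eqle; ring.
  rewrite normrM normrM normrX (ger0_norm i2) //.
  apply: le_trans (ler_wpM2l _ hS) _; first by rewrite mulr_ge0 // exprn_ge0.
  by apply: eqle; rewrite /K3; ring.
pose B2 := 2^-1 * Kc * `|al| ^+ 2.
have hf2 p : `|f2 p| <= B2.
  rewrite /f2 hs tc_scale normrM normrM normrX (ger0_norm i2) //.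
  rewrite /B2 -mulrA ler_wpM2l // mulrC ler_wpM2r ?exprn_ge0 //.
  exact: tc_bound.
have hf1 p : `|f1 p| <= B2 + K3 * `|al| ^+ 3.
  have -> : f1 p = f2 p + (f1 p - f2 p) by ring.
  by apply: le_trans (ler_normD _ _) _; apply: lerD.
rewrite -RintegralB //.
- apply: le_trans (Rint_bound muT _ (f := fun p => f1 p - f2 p) hdiff) _.
    exact: measurable_realfun.measurable_funB.
  by rewrite mulrAC lexx.
- exact: bdd_integrable muT mf1 hf1.
- exact: bdd_integrable muT mf2 hf2.
Qed.
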